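(* The automorphism group $\mathrm{Aut}_{\mathbf{Z}(\mathbb{M})}(E,e)$ of the tensor unit of the Drinfeld center of the bicategory $\mathbb{M}$ of rings and bimodules is cyclic of order $2$, consisting of the families $(1_A)_A$ and $(-1_A)_A$ acting on the bimodules $A$.
   Context: $\mathbb{M}$ is the bicategory whose objects are associative unital rings, with $\mathbb{M}(A,B)$ the category of $(B,A)$-bimodules, horizontal composition the tensor product over the middle ring, and identity 1-morphism the $(A,A)$-bimodule $A$. The Drinfeld center $\mathbf{Z}(\mathbb{B})$ of a bicategory has objects $(P,p)$ with $P(x)\in\mathbb{B}(x,x)$ and natural isomorphisms $p(M)\colon P(y)\otimes M\to M\otimes P(x)$ ($M\in\mathbb{B}(x,y)$), unital and satisfying $p(M\otimes N)=(\mathrm{id}(M)\otimes p(N))(p(M)\otimes\mathrm{id}(N))$; morphisms are families $f(x)\colon P(x)\to Q(x)$ compatible with $p,q$. The tensor unit is $(E,e)$ with $E(A)=A$ and $e$ given by the canonical isomorphisms $A'\otimes_{A'}N\cong N\cong N\otimes_A A$. *)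

(* Defs.v *)
From HB Require Import structures.
From mathcomp Require Import all_boot all_algebra.
Set Implicit Arguments. Unset Strict Implicit. Unset Printing Implicit Defensive.
Import GRing.Theory.
Local Open Scope ring_scope.

(* Associative unital rings (the zero ring allowed): pzRingType. *)
Record bimod (B A : pzRingType) := Bimod {
  bm_car :> zmodType;
  bm_l : B -> bm_car -> bm_car;
  bm_r : bm_car -> A -> bm_car;
  bm_lD : forall b m m', bm_l b (m + m') = bm_l b m + bm_l b m';
  bm_Dl : forall b b' m, bm_l (b + b') m = bm_l b m + bm_l b' m;
  bm_lM : forall b b' m, bm_l (b * b') m = bm_l b (bm_l b' m);
  bm_l1 : forall m, bm_l 1 m = m;
  bm_rD : forall m m' a, bm_r (m + m') a = bm_r m a + bm_r m' a;
  bm_Dr : forall m a a', bm_r m (a + a') = bm_r m a + bm_r m a';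
  bm_rM : forall m a a', bm_r m (a * a') = bm_r (bm_r m a) a';
  bm_r1 : forall m, bm_r m 1 = m;
  bm_lr : forall b m a, bm_r (bm_l b m) a = bm_l b (bm_r m a)
}.

Definition bimod_endo (A : pzRingType) (g : A -> A) : Prop :=
  (forall x y, g (x + y) = g x + g y) /\
  (forall a x c, g (a * x * c) = a * g x * c).

(* For M a (B,A)-bimodule, compatibility
   e(M) o (f(B) (x) id_M) = (id_M (x) f(A)) o e(M) : B (x)_B M -> M (x)_A A,
   transported along the canonical isomorphisms B (x)_B M ~ M ~ M (x)_A A
   (b(x)m |-> b.m, m(x)a |-> m.a) and evaluated on generators b (x) m, reads
   f(B)(b).m = (b.m).f(A)(1). *)
Definition center_unit_hom (f : forall A : pzRingType, A -> A) : Prop :=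
  (forall A : pzRingType, bimod_endo (f A)) /\
  (forall (B A : pzRingType) (M : bimod B A) (b : B) (m : M),
      @bm_l B A M (f B b) m = @bm_r B A M (@bm_l B A M b m) (f A 1)).

Definition center_unit_aut (f : forall A : pzRingType, A -> A) : Prop :=
  center_unit_hom f /\
  exists g : forall A : pzRingType, A -> A,
    center_unit_hom g /\
    (forall (A : pzRingType) (x : A), g A (f A x) = x) /\
    (forall (A : pzRingType) (x : A), f A (g A x) = x).

(* Main.v *)
Require Import Defs.
From HB Require Import structures.
From mathcomp Require Import all_boot all_algebra.
From mathcomp Require Import zify.
From Stdlib Require Import FunctionalExtensionality.
Import GRing.Theory.
Local Open Scope ring_scope.

Definition Zbim (A : pzRingType) : bimod A int.
refine (@Bimod A int A (fun b m => b * m) (fun m a => m *~ a) _ _ _ _ _ _ _ _ _).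
- by move=> *; rewrite mulrDr.
- by move=> *; rewrite mulrDl.
- by move=> *; rewrite mulrA.
- by move=> *; rewrite mul1r.
- by move=> m m' a; rewrite mulrzDl_tmp.
- by move=> m a a'; rewrite mulrzDr_tmp.
- by move=> m a a'; rewrite mulrzA.
- by move=> m; rewrite mulr1z.
- by move=> b m a; rewrite mulrzAr.
Defined.

Lemma addhomN (U V : zmodType) (h : U -> V) :
  (forall x y, h (x + y) = h x + h y) -> forall x, h (- x) = - h x.
Proof.
move=> hD x.
have h0 : h 0 = 0.
  by apply: (@addrI _ (h 0)); rewrite -hD !addr0.
apply/eqP; rewrite -subr_eq0 opprK -hD addNr h0 //.
Qed.

Lemma hom_mul f : center_unit_hom f -> forall (A : pzRingType) (x : A),
  f A x = x * (f int 1)%:~R.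
Proof.
move=> [He Hc] A x.
have := Hc A int (Zbim A) 1 1 => /= .
rewrite !mulr1 => E1.
have [_ HM] := He A.
by rewrite -[x in f A x]mulr1 -[x * 1]mulr1 HM mulr1 E1.
Qed.

Lemma negid_hom : center_unit_hom (fun (A : pzRingType) (x : A) => - x).
Proof.
split.
  move=> A; split; first by move=> x y; rewrite opprD.
  by move=> a x c; rewrite mulrN mulNr.
move=> B A M b m.
rewrite (@addhomN _ _ (fun b0 => @bm_l B A M b0 m)); last by move=> x y; apply: bm_Dl.
rewrite (@addhomN _ _ (fun a0 => @bm_r B A M (@bm_l B A M b m) a0)); last by move=> x y; apply: bm_Dr.
by rewrite bm_r1.
Qed.

Lemma id_hom : center_unit_hom (fun (A : pzRingType) (x : A) => x).
Proof.
split; first by move=> A; split.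
by move=> B A M b m; rewrite bm_r1.
Qed.

Lemma int_unit1 (u v : int) : u * v = 1 -> u = 1 \/ u = -1.
Proof.
move=> H.
have := congr1 (fun z => `|z|%N) H. rewrite abszM /= => /eqP. rewrite muln_eq1 => /andP[/eqP Hu _].
by clear H; case: u Hu => [[|[|]]|[|]] //= _; [left|right].
Qed.

Theorem proposition6p2 :
  (forall f : forall A : pzRingType, A -> A,
      center_unit_aut f <->
      ((forall (A : pzRingType) (x : A), f A x = x) \/
       (forall (A : pzRingType) (x : A), f A x = - x))) /\
  ~ (forall (A : pzRingType) (x : A), x = - x).
Proof.
split; last first.
  by move=> H; have := H int 1.
move=> f; split.
  move=> [Hf [g [Hg [Hgf Hfg]]]].
  have Ef := @hom_mul f Hf; have Eg := @hom_mul g Hg.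
  have := Hgf int 1; rewrite (Eg int (f int 1)) intz => Huv.
  have : (f int 1 = 1) \/ (f int 1 = -1).
    exact: int_unit1 Huv.
  case=> Hu; [left|right] => A x; rewrite Ef Hu; first by rewrite mulr1.
  by rewrite mulrN1.
case=> Hf.
  have -> : f = (fun (A : pzRingType) (x : A) => x).
    apply: functional_extensionality_dep => A; apply: functional_extensionality => x.
    exact: Hf.
  by split; [apply: id_hom | exists (fun (A : pzRingType) (x : A) => x); split; [apply: id_hom|]].
have -> : f = (fun (A : pzRingType) (x : A) => - x).
  apply: functional_extensionality_dep => A; apply: functional_extensionality => x.
  exact: Hf.
split; first exact: negid_hom.
exists (fun (A : pzRingType) (x : A) => - x); split; first exact: negid_hom.
by split=> A x; rewrite opprK.
Qed.
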